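(* Let $(Q,Z)$ be a locally gentle pair and let $v,w\in Q_0$ be distinct relational vertices. Let $x=v^{w}\in Q^{w}_0$ and $y=w^{v}\in Q^{v}_0$. Then there is a quiver isomorphism $(Q^{w})^{x}\to (Q^{v})^{y}$ which maps $(Z^{w})^{x}$ onto $(Z^{v})^{y}$.
   Context: A quiver $Q$ has vertex set $Q_0$, arrow set $Q_1$, head and tail maps $h,t$. $Z$ is a set of paths of length $2$; a path is admissible if no element of $Z$ is a subpath. $(Q,Z)$ is locally gentle if every vertex is head of at most two and tail of at most two arrows, and for each arrow $b$ there is at most one admissible and at most one inadmissible length-2 path of the form $cb$, and likewise of the form $ba$. A vertex $v$ is relational if some $ba\in Z$ has $t(b)=v=h(a)$. For such $v$ let $b,a$ be as stated, $c$ the other arrow with head $v$ (if any), $d$ the other arrow with tail $v$ (if any). The levee $(Q^v,Z^v)$ at $v$: vertices $u^v$ ($u\neq v$) plus two new distinct vertices $v(\sharp),v(\flat)$; arrows $e^v$ ($e\in Q_1$) with heads/tails $h(e)^v$, $t(e)^v$ when these are not $v$, and otherwise $t^v(b^v)=v(\sharp)=h^v(c^v)$, $t^v(d^v)=v(\flat)=h^v(a^v)$ (whenever the arrows exist); $Z^v=\{m^vn^v: mn\in Z,\ t(m)\neq v\}$. The levee of a locally gentle pair is locally gentle, and in the situation of the claim $x$ is relational in $(Q^w,Z^w)$ and $y$ is relational in $(Q^v,Z^v)$, so the iterated levees are defined. *)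

(* Defs.v *)
From mathcomp Require Import all_boot.


Record quiver := Quiver {
  vert : finType;
  arr : finType;
  qhead : arr -> vert;
  qtail : arr -> vert }.
Arguments qhead {q} _.
Arguments qtail {q} _.
Arguments Quiver : clear implicits.

(* A set Z of paths of length 2 is given as a relation on arrows:
   [Z b a] means that the path  b a  (first a, then b; t(b) = h(a)) is in Z. *)

Definition paths2 {Q : quiver} (Z : rel (arr Q)) : Prop :=
  forall b a, Z b a -> qtail b = qhead a.

Definition locally_gentle {Q : quiver} (Z : rel (arr Q)) : Prop :=
  [/\ paths2 Z,
      (forall v : vert Q, #|[set e | qhead e == v]| <= 2),
      (forall v : vert Q, #|[set e | qtail e == v]| <= 2),
      (forall b : arr Q,
          #|[set c | (qtail c == qhead b) && ~~ Z c b]| <= 1 /\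
          #|[set c | (qtail c == qhead b) && Z c b]| <= 1) &
      (forall b : arr Q,
          #|[set a | (qhead a == qtail b) && ~~ Z b a]| <= 1 /\
          #|[set a | (qhead a == qtail b) && Z b a]| <= 1)].

Definition relational {Q : quiver} (Z : rel (arr Q)) (v : vert Q) : Prop :=
  exists b a, [/\ Z b a, qtail b = v & qhead a = v].

(* Vertices of the levee at v:  u^v for u <> v  (inl), and the two new
   vertices v(sharp) = inr true, v(flat) = inr false. *)
Definition levV {Q : quiver} (v : vert Q) : finType :=
  ({u : vert Q | u != v} + bool)%type.

Definition lev_old {Q : quiver} {v u : vert Q} (H : u != v) : levV v :=
  inl (exist (fun u => u != v) u H).

Definition v_sharp {Q : quiver} (v : vert Q) : levV v := inr true.
Definition v_flat {Q : quiver} (v : vert Q) : levV v := inr false.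

Definition lev_map {Q : quiver} (v u : vert Q) (s : bool) : levV v :=
  if insub u is Some x then inl x else inr s.

(* The levee at v, w.r.t. the chosen relation  b a  in Z with t(b) = v = h(a).
   The arrows are the e^v, e in Q_1 (same arrow type).
   Heads: h(a^v) = v(flat), h(c^v) = v(sharp) for the other arrow c with qhead v.
   Tails: t(b^v) = v(sharp), t(d^v) = v(flat) for the other arrow d with qtail v. *)
Definition levee {Q : quiver} (v : vert Q) (b a : arr Q) : quiver :=
  Quiver (levV v) (arr Q)
    (fun e => lev_map v (qhead e) (e != a))
    (fun e => lev_map v (qtail e) (e == b)).

Definition leveeZ {Q : quiver} (Z : rel (arr Q)) (v : vert Q) (b a : arr Q)
  : rel (arr (levee v b a)) :=
  fun m n => Z m n && (qtail (q:=Q) m != v).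

Definition quiver_iso {Q1 Q2 : quiver} (fV : vert Q1 -> vert Q2)
  (fA : arr Q1 -> arr Q2) : Prop :=
  [/\ bijective fV, bijective fA,
      (forall e, qhead (fA e) = fV (qhead e)) &
      (forall e, qtail (fA e) = fV (qtail e))].

(* Main.v *)
Require Import Defs.
From mathcomp Require Import all_boot.

Lemma lm_old (Q : quiver) (v u : vert Q) s (H : u != v) :
  lev_map v u s = inl (exist _ u H).
Proof. by rewrite /lev_map insubT. Qed.

Lemma lm_new (Q : quiver) (v : vert Q) s : lev_map v v s = inr s.
Proof. by rewrite /lev_map insubF // eqxx. Qed.

Lemma inv_old (Q : quiver) (w u v : vert Q) s (H : v != w) :
  lev_map w u s = lev_old H -> u = v.
Proof.
rewrite /lev_map; case: insubP => [x' _ <- |_]; last by [].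
by case=> ->.
Qed.

Arguments inv_old {Q w u v s H}.
Arguments lm_old {Q v u} s H.
Arguments lm_new {Q} v s.

Lemma lm_irr (Q : quiver) (v u : vert Q) s s' : u != v ->
  lev_map v u s = lev_map v u s'.
Proof. by move=> H; rewrite (lm_old s H) (lm_old s' H). Qed.
Arguments lm_irr {Q v u} s s' _.

Lemma lm_eq_old (Q : quiver) (v u w : vert Q) s (H : w != v) :
  (lev_map v u s == lev_old H) = (u == w).
Proof.
rewrite /lev_map; case: insubP => [x' _ <-|hn] /=.
  case: x' => x hx /=; apply/eqP/eqP => [[]|E] //; congr inl; exact: val_inj.
move: hn; rewrite negbK => /eqP ->; apply/esym/negbTE; by rewrite eq_sym.
Qed.

Lemma new_neq (Q : quiver) (v w : vert Q) s (H : w != v) :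
  (inr s : levV v) != lev_old H.
Proof. by []. Qed.

Arguments new_neq {Q v w} s H.

Lemma two_le (T : finType) (S : {set T}) a b c :
  #|S| <= 2 -> a \in S -> b \in S -> c \in S -> a != b -> c = a \/ c = b.
Proof.
move=> hS aS bS cS ab.
case: (c =P a) => [->|ca]; first by left.
case: (c =P b) => [->|cb]; first by right.
have : #|[set c; a; b]| <= 2.
  apply: leq_trans hS; apply: subset_leq_card; apply/subsetP => z.
  by rewrite !inE => /orP [/orP [] | ] /eqP ->.
rewrite -setUA cardsU1 cards2 ab !inE.
by move/eqP: ca => ca; move/eqP: cb => cb; rewrite (negbTE ca) (negbTE cb).
Qed.

Lemma old_neq (Q : quiver) (v u w : vert Q) (Hu : u != w) (Hv : v != w) :
  u != v -> (inl (exist _ u Hu) : levV w) != lev_old Hv.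
Proof. move=> uv; apply/eqP; case=> E; by rewrite E eqxx in uv. Qed.
Arguments old_neq {Q v u w} Hu Hv _.

Theorem lemma2p11 (Q : quiver) (Z : rel (arr Q)) (v w : vert Q)
  (hLG : locally_gentle Z) (hvw : v != w) (hwv : w != v)
  (* chosen relation  bv av  in Z at v, and  bw aw  at w *)
  (bv av : arr Q) (hZv : Z bv av) (htv : qtail bv = v) (hhv : qhead av = v)
  (bw aw : arr Q) (hZw : Z bw aw) (htw : qtail bw = w) (hhw : qhead aw = w)
  (* x = v^w in Q^w, with a chosen relation bx ax in Z^w at x *)
  (bx ax : arr (levee w bw aw))
  (hZx : leveeZ Z w bw aw bx ax)
  (htx : qtail bx = (lev_old hvw : vert (levee w bw aw)))
  (hhx : qhead ax = (lev_old hvw : vert (levee w bw aw)))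
  (* y = w^v in Q^v, with a chosen relation by ay in Z^v at y *)
  (by_ ay : arr (levee v bv av))
  (hZy : leveeZ Z v bv av by_ ay)
  (hty : qtail by_ = (lev_old hwv : vert (levee v bv av)))
  (hhy : qhead ay = (lev_old hwv : vert (levee v bv av))) :
  exists (fV : vert (levee (Q := levee w bw aw) (lev_old hvw) bx ax) ->
               vert (levee (Q := levee v bv av) (lev_old hwv) by_ ay))
         (fA : arr (levee (Q := levee w bw aw) (lev_old hvw) bx ax) ->
               arr (levee (Q := levee v bv av) (lev_old hwv) by_ ay)),
    quiver_iso fV fA /\
    forall m n,
      leveeZ (Q := levee v bv av) (leveeZ Z v bv av) (lev_old hwv) by_ ay
        (fA m) (fA n)
      = leveeZ (Q := levee w bw aw) (leveeZ Z w bw aw) (lev_old hvw) bx ax m n.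
Proof.
case: hLG => hP hH hT hB hA.
move/andP: hZx => [Zx _]; move/andP: hZy => [Zy _].
have Etx : qtail (q:=Q) bx = v := inv_old htx.
have Ehx : qhead (q:=Q) ax = v := inv_old hhx.
have Ety : qtail (q:=Q) by_ = w := inv_old hty.
have Ehy : qhead (q:=Q) ay = w := inv_old hhy.
have uB : forall b b' a, Z b a -> Z b' a -> qtail b = qhead a ->
    qtail b' = qhead a -> b = b'.
  move=> b b' a Zb Zb' tb tb'; case: (hB a) => _ /card_le1_eqP; apply;
  by rewrite !inE ?tb ?tb' ?eqxx ?Zb ?Zb'.
have uA : forall b a a', Z b a -> Z b a' -> qtail b = qhead a ->
    qtail b = qhead a' -> a = a'.
  move=> b a a' Za Za' ta ta'; case: (hA b) => _ /card_le1_eqP; apply;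
  by rewrite !inE -?ta -?ta' ?eqxx ?Za ?Za'.
have flip : forall (u : vert Q) b1 a1 b2 a2, Z b1 a1 -> Z b2 a2 ->
    qtail b1 = u -> qhead a1 = u -> qtail b2 = u -> qhead a2 = u ->
    (forall e, qhead e = u -> (if a1 == a2 then e != a1 else ~~ (e != a1)) = (e != a2)) /\
    (forall e, qtail e = u -> (if a1 == a2 then e == b1 else ~~ (e == b1)) = (e == b2)).
  move=> u b1 a1 b2 a2 Z1 Z2 t1 h1 t2 h2.
  case: (a1 =P a2) => [E|NE].
    subst a2; have E : b1 = b2 by apply: uB Z1 Z2 _ _; rewrite ?t1 ?t2 ?h1.
    by subst b2.
  have NB : b1 != b2.
    apply/eqP => E; subst b2; apply: NE; apply: uA Z1 Z2 _ _; by rewrite ?t1 ?h1 ?h2.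
  have NE' : a1 != a2 by apply/eqP.
  have NE2 : (a2 == a1) = false by rewrite eq_sym (negbTE NE').
  have NB1 : (b1 == b2) = false by rewrite (negbTE NB).
  have NB2 : (b2 == b1) = false by rewrite eq_sym (negbTE NB).
  split=> e he.
    have := @two_le _ _ a1 a2 e (hH u); rewrite !inE h1 h2 he eqxx.
    by move=> /(_ isT isT isT NE') [] ->; rewrite ?eqxx ?negbK ?NE2 ?(negbTE NE').
  have := @two_le _ _ b1 b2 e (hT u); rewrite !inE t1 t2 he eqxx.
  by move=> /(_ isT isT isT NB) [] ->; rewrite ?eqxx ?NB1 ?NB2.
have [fvH fvT] := flip v bx ax bv av Zx hZv Etx Ehx htv hhv.
have [fwH fwT] := flip w bw aw by_ ay hZw Zy htw hhw Ety Ehy.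
clear flip uA uB hA hB hH hT.
pose sv := fun s : bool => if ax == av then s else ~~ s.
pose sw := fun s : bool => if aw == ay then s else ~~ s.
have svK : involutive sv by rewrite /sv; case: (_ == _) => [] [].
have swK : involutive sw by rewrite /sw; case: (_ == _) => [] [].
pose fV := fun p : levV (Q:=levee w bw aw) (lev_old hvw) => match p with
 | inr s => lev_map (Q:=levee v bv av) (lev_old hwv) (inr (sv s)) false
 | inl q => match val q with
    | inr s => (inr (sw s) : levV (Q:=levee v bv av) (lev_old hwv))
    | inl u => lev_map (Q:=levee v bv av) (lev_old hwv) (lev_map v (val u) false) false end end.
pose gV := fun p : levV (Q:=levee v bv av) (lev_old hwv) => match p with
 | inr s => lev_map (Q:=levee w bw aw) (lev_old hvw) (inr (sw s)) false
 | inl q => match val q with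
    | inr s => (inr (sv s) : levV (Q:=levee w bw aw) (lev_old hvw))
    | inl u => lev_map (Q:=levee w bw aw) (lev_old hvw) (lev_map w (val u) false) false end end.
exists fV, id; split; [split|].
- exists gV.
  + case=> [[[[u Hu]|s] Hq]|s] /=.
    * have huv : u != v.
        by apply: contra Hq => /eqP E; apply/eqP; congr inl; exact: val_inj.
      by rewrite (lm_old false huv) (@lm_old (levee v bv av) (lev_old hwv) _ false (old_neq huv hwv Hu)) /= (lm_old false Hu) (@lm_old (levee _ _ _) _ _ false Hq).
    * by rewrite swK (@lm_old (levee _ _ _) _ _ false Hq).
    * by rewrite (@lm_old (levee v bv av) (lev_old hwv) _ false (new_neq (sv s) hwv)) /= svK.
  + case=> [[[[u Hu]|s] Hq]|s] /=.
    * have huw : u != w.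
        by apply: contra Hq => /eqP E; apply/eqP; congr inl; exact: val_inj.
      by rewrite (lm_old false huw) (@lm_old (levee w bw aw) (lev_old hvw) _ false (old_neq huw hvw Hu)) /= (lm_old false Hu) (@lm_old (levee _ _ _) _ _ false Hq).
    * by rewrite svK (@lm_old (levee _ _ _) _ _ false Hq).
    * by rewrite (@lm_old (levee w bw aw) (lev_old hvw) _ false (new_neq (sw s) hvw)) /= swK.
  + exact: inv_bij.
- move=> e /=.
  case: (qhead (q:=Q) e =P v) => hv.
    rewrite hv lm_new (lm_old (e != aw) hvw) (@lm_new (levee w bw aw) (lev_old hvw)) /=.
    rewrite /sv (fvH e hv); apply: (@lm_irr (levee v bv av) (lev_old hwv)); by [].
  case: (qhead (q:=Q) e =P w) => hw.
    rewrite hw lm_new (lm_old (e != av) hwv) (@lm_new (levee v bv av) (lev_old hwv)).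
    rewrite (@lm_old (levee w bw aw) (lev_old hvw) _ (e != ax) (new_neq (e != aw) hvw)) /=.
    by rewrite /sw (fwH e hw).
  move/eqP: hv => hv; move/eqP: hw => hw.
  rewrite (lm_old (e != aw) hw) (@lm_old (levee w bw aw) (lev_old hvw) _ (e != ax) (old_neq hw hvw hv)) /=.
  rewrite (lm_old (e != av) hv) (lm_old false hv); apply: (@lm_irr (levee v bv av) (lev_old hwv)); exact: old_neq.
- move=> e /=.
  case: (qtail (q:=Q) e =P v) => hv.
    rewrite hv lm_new (lm_old (e == bw) hvw) (@lm_new (levee w bw aw) (lev_old hvw)) /=.
    rewrite /sv (fvT e hv); apply: (@lm_irr (levee v bv av) (lev_old hwv)); by [].
  case: (qtail (q:=Q) e =P w) => hw.
    rewrite hw lm_new (lm_old (e == bv) hwv) (@lm_new (levee v bv av) (lev_old hwv)).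
    rewrite (@lm_old (levee w bw aw) (lev_old hvw) _ (e == bx) (new_neq (e == bw) hvw)) /=.
    by rewrite /sw (fwT e hw).
  move/eqP: hv => hv; move/eqP: hw => hw.
  rewrite (lm_old (e == bw) hw) (@lm_old (levee w bw aw) (lev_old hvw) _ (e == bx) (old_neq hw hvw hv)) /=.
  rewrite (lm_old (e == bv) hv) (lm_old false hv); apply: (@lm_irr (levee v bv av) (lev_old hwv)); exact: old_neq.
- move=> m n; rewrite /leveeZ /= !lm_eq_old.
  by case: (Z m n); case: (qtail (q:=Q) m == v); case: (qtail (q:=Q) m == w).
Qed.
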